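(* Let $p\in\mathbb{R}$ and $\gamma>0$. Let $z=(v,m,\sigma,e)\in Z$ satisfy $m\ne(e+p)v$, $2e-|v|^2>0$, $M(z)=0$, $e<\gamma$ and \[\left|\frac{(m-(e+p)v)(2\gamma-|v|^2)}{(\gamma-e)(2e-|v|^2)}-v\right|\le\sqrt{2\gamma}.\] Then $z\in K_\gamma^{\Lambda,1}$.
   Context: $\mathcal S_0^{2\times2}$ is the space of traceless symmetric $2\times2$ matrices, $Z:=\mathbb{R}^2\times\mathbb{R}^2\times\mathcal S_0^{2\times2}\times\mathbb{R}$, $K_\gamma:=\{z\in Z: v\otimes v-\sigma=e\,\mathrm{Id},\ m=(e+p)v,\ e\le\gamma\}$. The wave cone is $\Lambda=\{\bar z=(\bar v,\bar m,\bar\sigma,\bar e)\in Z:\ (\bar v,\bar e)\neq0\text{ and there is }0\ne(\xi,c)\in\mathbb{R}^2\times\mathbb{R}\text{ with }(\bar\sigma+\bar e\,\mathrm{Id})\xi+c\bar v=0,\ \bar v\cdot\xi=0,\ \bar m\cdot\xi+c\bar e=0\}$. $K_\gamma^{\Lambda,1}:=K_\gamma\cup\{sz_1+(1-s)z_2: z_1,z_2\in K_\gamma,\ s\in[0,1],\ z_1-z_2\in\Lambda\}$. For $z$ with $m\ne(e+p)v$, $\eta(z):=\frac{m-(e+p)v}{|m-(e+p)v|}$ and $M(z):=v\otimes v-\sigma-e\,\mathrm{Id}+(2e-|v|^2)\eta(z)\otimes\eta(z)$. *)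

(* Defs.v *)
From HB Require Import structures.
From mathcomp Require Import all_boot all_order all_algebra.
From mathcomp Require Import reals.
Set Implicit Arguments. Unset Strict Implicit. Unset Printing Implicit Defensive.
Import Order.TTheory GRing.Theory Num.Theory.
Local Open Scope ring_scope.

Section Defs.
Variable R : realType.

(* The carrier is all of R^2 x R^2 x M_2 x R; membership in Z additionally
   requires sigma symmetric and traceless (predicate in_Z). *)
Record Zpt := mkZ { zv : 'cV[R]_2; zm : 'cV[R]_2; zs : 'M[R]_2; ze : R }.

Definition in_Z (z : Zpt) : Prop := (zs z)^T = zs z /\ \tr (zs z) = 0.

Definition dot (u w : 'cV[R]_2) : R := (u^T *m w) 0 0.
Definition vnorm (u : 'cV[R]_2) : R := Num.sqrt (dot u u).
Definition tens (u w : 'cV[R]_2) : 'M[R]_2 := u *m w^T.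

Definition zsub (z1 z2 : Zpt) : Zpt :=
  mkZ (zv z1 - zv z2) (zm z1 - zm z2) (zs z1 - zs z2) (ze z1 - ze z2).

Definition zcomb (s : R) (z1 z2 : Zpt) : Zpt :=
  mkZ (s *: zv z1 + (1 - s) *: zv z2) (s *: zm z1 + (1 - s) *: zm z2)
      (s *: zs z1 + (1 - s) *: zs z2) (s * ze z1 + (1 - s) * ze z2).

Definition Kg (p gamma : R) (z : Zpt) : Prop :=
  [/\ in_Z z,
      tens (zv z) (zv z) - zs z = ze z *: 1%:M,
      zm z = (ze z + p) *: zv z
    & ze z <= gamma].

Definition Lambda (zb : Zpt) : Prop :=
  [/\ in_Z zb,
      ~ (zv zb = 0 /\ ze zb = 0)
    & exists (xi : 'cV[R]_2) (c : R), (xi <> 0 \/ c <> 0) /\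
        (zs zb + ze zb *: 1%:M) *m xi + c *: zv zb = 0 /\
        dot (zv zb) xi = 0 /\
        dot (zm zb) xi + c * ze zb = 0].

Definition KLambda1 (p gamma : R) (z : Zpt) : Prop :=
  Kg p gamma z \/
  exists (z1 z2 : Zpt) (s : R),
    [/\ Kg p gamma z1, Kg p gamma z2, 0 <= s <= 1,
        Lambda (zsub z1 z2) & z = zcomb s z1 z2].

Definition defect (p : R) (z : Zpt) : 'cV[R]_2 := zm z - (ze z + p) *: zv z.

(* eta(z), meaningful when m <> (e+p) v *)
Definition eta (p : R) (z : Zpt) : 'cV[R]_2 := (vnorm (defect p z))^-1 *: defect p z.

Definition Mz (p : R) (z : Zpt) : 'M[R]_2 :=
  tens (zv z) (zv z) - zs z - ze z *: 1%:M
  + (2 * ze z - vnorm (zv z) ^+ 2) *: tens (eta p z) (eta p z).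

End Defs.

(* Main.v *)
Require Import Defs.
From HB Require Import structures.
From mathcomp Require Import all_boot all_order all_algebra.
From mathcomp Require Import reals.
From mathcomp Require Import ring lra.
Import Order.TTheory GRing.Theory Num.Theory.
Local Open Scope ring_scope.

Lemma core2 (R : realFieldType) (a b c0 K G P mu : R) :
 0 < a -> 0 < b -> 0 < K -> 0 < G -> P = 2*G + a*b -> 2*c0 = K - b + a ->
 mu = P * K / (2 * G) -> mu^+2 - 2*mu*c0 - P <= 0 -> b * K <= 2 * G.
Proof.
move=> a0 b0 K0 G0 HP Hc Hmu H1.
have P0 : 0 < P by rewrite HP; nra.
have [B HB] : exists B, B = 2*G/K by eexists.
have HKB : K * B = 2*G by rewrite HB; field; lra.
have HmuB : mu * B = P by rewrite Hmu HB; field; apply/andP; split; lra.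
have B0 : 0 < B by rewrite HB divr_gt0 //; lra.
have H2 : P * (P - 2*c0*B - B^+2) <= 0.
  have -> : P * (P - 2*c0*B - B^+2) = B^+2 * (mu^+2 - 2*mu*c0 - P).
    rewrite -HmuB; ring.
  nra.
have H3 : P - 2*c0*B - B^+2 <= 0 by nra.
have H4 : 0 <= (B - b) * (B + a).
  have -> : (B - b) * (B + a) = - (P - 2*c0*B - B^+2).
    rewrite HP -HKB; have -> : 2 * c0 * B = (K - b + a) * B by rewrite -Hc.
    ring.
  lra.
have H5 : b <= B by nra.
rewrite -HKB; nra.
Qed.

Lemma core (R : realFieldType) (a b c0 xx e g n mu : R) :
 0 < a -> 0 < b -> e < g -> a*b = 2*e - xx -> n = a*b*(b - a + 2*c0)/2 -> 0 < n ->
 mu = (2*g - xx)/((g-e)*(2*e-xx)) * n -> mu^+2 - 2*mu*c0 + xx <= 2*g ->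
 (xx + 2*b*c0 + b^+2)/2 <= g /\ (xx - 2*a*c0 + a^+2)/2 <= g.
Proof.
move=> a0 b0 eg Hab Hn n0 Hmu Hh.
have ab0 : 0 < a * b by rewrite mulr_gt0.
have K0 : 0 < b - a + 2*c0.
  move: n0; rewrite Hn pmulr_lgt0 ?invr_gt0 ?ltr0n //.
  by rewrite pmulr_rgt0.
have G0 : 0 < g - e by rewrite subr_gt0.
have := @core2 R a b c0 (b - a + 2*c0) (g - e) (2*g - xx) mu a0 b0 K0 G0.
move=> /(_ _ _ _ _) H.
have H' : b * (b - a + 2*c0) <= 2 * (g - e).
  apply: H.
  - rewrite Hab; ring.
  - ring.
  - rewrite Hmu Hn -Hab; field; apply/and3P; split; lra.
  - lra.
split.
- have -> : xx = 2*e - a*b by rewrite Hab; ring.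
  nra.
- have -> : xx = 2*e - a*b by rewrite Hab; ring.
  nra.
Qed.

Section H.
Variable R : realType.
Lemma l01 : lift ord0 ord0 = 1 :> 'I_2.
Proof. exact: val_inj. Qed.
Lemma I2 (i : 'I_2) : i = 0 \/ i = 1.
Proof. by case: i => [[|[|//]] Hi]; [left|right]; apply/val_inj. Qed.
Lemma dotE (u w : 'cV[R]_2) : dot u w = u 0 0 * w 0 0 + u 1 0 * w 1 0.
Proof. by rewrite /dot mxE !big_ord_recl big_ord0 addr0 !mxE l01. Qed.
Lemma tensE (u w : 'cV[R]_2) i j : tens u w i j = u i 0 * w j 0.
Proof. by rewrite /tens mxE big_ord1 !mxE. Qed.
Lemma cVP (u w : 'cV[R]_2) : (forall i, u i 0 = w i 0) -> u = w.
Proof. by move=> H; apply/matrixP => i j; rewrite (ord1 j). Qed.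
Lemma trE (A : 'M[R]_2) : \tr A = A 0 0 + A 1 1.
Proof. by rewrite /mxtrace !big_ord_recl big_ord0 addr0 l01. Qed.
Lemma mulE (A : 'M[R]_2) (u : 'cV[R]_2) i : (A *m u) i 0 = A i 0 * u 0 0 + A i 1 * u 1 0.
Proof. by rewrite mxE !big_ord_recl big_ord0 addr0 l01. Qed.
Lemma vnorm2 (u : 'cV[R]_2) : vnorm u ^+ 2 = u 0 0 ^+ 2 + u 1 0 ^+ 2.
Proof. by rewrite /vnorm sqr_sqrtr dotE -?expr2 // addr_ge0 // sqr_ge0. Qed.
Lemma KgI (u : 'cV[R]_2) (eu p g : R) :
  u 0 0 ^+ 2 + u 1 0 ^+ 2 = 2 * eu -> eu <= g ->
  Kg p g (mkZ u ((eu + p) *: u) (tens u u - eu *: 1%:M) eu).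
Proof.
move=> Hu Hg; split => //=.
- split => /=.
  + apply/matrixP => i j; rewrite !mxE !big_ord1 !mxE.
    by rewrite [u j _ * _]mulrC eq_sym.
  + rewrite trE !mxE !big_ord1 !mxE /=.
    rewrite !expr2 in Hu; lra.
- by rewrite opprB addrC subrK.
Qed.
End H.

Theorem lemma2p9 (R : realType) (p gamma : R) (z : Zpt R) :
  0 < gamma ->
  in_Z z ->
  zm z <> (ze z + p) *: zv z ->
  0 < 2 * ze z - vnorm (zv z) ^+ 2 ->
  Mz p z = 0 ->
  ze z < gamma ->
  vnorm (((2 * gamma - vnorm (zv z) ^+ 2)
            / ((gamma - ze z) * (2 * ze z - vnorm (zv z) ^+ 2)))
           *: defect p z - zv z)
    <= Num.sqrt (2 * gamma) ->
  KLambda1 p gamma z.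
Proof.
case: z => v m s e /=.
move=> g0 [/= Hsym Htr] Hd HD HM Heg Hc.
pose d := defect p (mkZ v m s e).
have Hdi : forall i, d i 0 = m i 0 - (e + p) * v i 0 by move=> i; rewrite !mxE.
have dne : d 0 0 ^+ 2 + d 1 0 ^+ 2 > 0.
  rewrite lt_neqAle addr_ge0 ?sqr_ge0 // andbT eq_sym paddr_eq0 ?sqr_ge0 // !sqrf_eq0.
  apply/negP => /andP [/eqP h0 /eqP h1]; apply: Hd.
  apply: cVP => i; case: (I2 i) => ->; apply/eqP; rewrite mxE -subr_eq0.
  - by rewrite -Hdi h0.
  - by rewrite -Hdi h1.
have [n Hn] : exists n, n = vnorm d by eexists.
have n2 : n ^+ 2 = d 0 0 ^+ 2 + d 1 0 ^+ 2 by rewrite Hn vnorm2.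
have n0 : 0 < n by rewrite Hn /vnorm sqrtr_gt0 dotE -!expr2.
have [h Hh] : exists h : 'I_2 -> R, forall i, h i = Defs.eta p (mkZ v m s e) i 0.
  by exists (fun i => Defs.eta p (mkZ v m s e) i 0).
have hE : forall i, h i = n^-1 * d i 0 by move=> i; rewrite Hh mxE Hn.
have Hh1 : h 0 ^+ 2 + h 1 ^+ 2 = 1.
  rewrite !hE; transitivity (n^-1 ^+ 2 * (d 0 0 ^+ 2 + d 1 0 ^+ 2)); first ring.
  rewrite -n2; field; lra.
have Hdn : forall i, d i 0 = n * h i by move=> i; rewrite hE; field; lra.
have Hm : forall i, m i 0 = n * h i + (e + p) * v i 0.
  by move=> i; rewrite -Hdn Hdi; ring.
move: HD Hc; rewrite vnorm2 => HD Hc.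
have Hs : forall i j, s i j = v i 0 * v j 0 - e * (i == j)%:R
                 + (2 * e - (v 0 0 ^+ 2 + v 1 0 ^+ 2)) * (h i * h j).
  move=> i j; move: HM; rewrite /Mz -/(Defs.eta p _).
  set hv := Defs.eta p _ in Hh *; clearbody hv.
  move=> HM; have := congr1 (fun M : 'M[R]_2 => M i j) HM.
  rewrite !mxE !big_ord1 !mxE -!Hh vnorm2 => H.
  rewrite -[s i j]addr0 -H /=; ring.
have [xx Hxx] : exists xx, xx = v 0 0 ^+ 2 + v 1 0 ^+ 2 by eexists.
have [c0 Hc0] : exists c0, c0 = v 0 0 * h 0 + v 1 0 * h 1 by eexists.
have [mu Hmu] : exists mu, mu = (2 * gamma - xx) / ((gamma - e) * (2 * e - xx)) * n
  by eexists.
have Hc2 : mu ^+ 2 - 2 * mu * c0 + xx <= 2 * gamma.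
  move: Hc; rewrite /vnorm ler_sqrt; last by lra.
  rewrite dotE !mxE /= -!Hdi !Hdn -Hxx.
  have -> : (2 * gamma - xx) / ((gamma - e) * (2 * e - xx)) = mu / n.
    by rewrite Hmu; field; lra.
  have E : forall i : 'I_2, mu / n * (n * h i) - v i 0 = mu * h i - v i 0.
    by move=> i; field; lra.
  rewrite !E.
  suff -> : (mu * h 0 - v 0 0) * (mu * h 0 - v 0 0) + (mu * h 1 - v 1 0) * (mu * h 1 - v 1 0)
     = mu ^+ 2 - 2 * mu * c0 + xx by [].
  transitivity (mu ^+ 2 * (h 0 ^+ 2 + h 1 ^+ 2) - 2 * mu * c0 + xx).
    by rewrite Hc0 Hxx; ring.
  by rewrite Hh1 mulr1.
rewrite -Hxx in HD Hs.
have [D HDe] : exists D, D = 2 * e - xx by eexists.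
rewrite -HDe in HD Hs Hmu.
have [k Hk] : exists k, k = 2 * n / D - 2 * c0 by eexists.
have [r Hr] : exists r, r = Num.sqrt (k ^+ 2 + 4 * D) by eexists.
have r2 : r ^+ 2 = k ^+ 2 + 4 * D by rewrite Hr sqr_sqrtr //; nra.
have r0 : 0 <= r by rewrite Hr sqrtr_ge0.
have [b Hb] : exists b, b = (k + r) / 2 by eexists.
have b0 : 0 < b by rewrite Hb; nra.
have [a Ha] : exists a, a = D / b by eexists.
have a0 : 0 < a by rewrite Ha divr_gt0.
have Hab : a * b = D by rewrite Ha; field; lra.
have hq : b ^+ 2 - k * b - D = 0.
  have -> : b ^+ 2 - k * b - D = (r ^+ 2 - k ^+ 2) / 4 - D by rewrite Hb; field.
  by rewrite r2; field.
have Hba : b - a = k.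
  apply: (mulIf (lt0r_neq0 b0)).
  have -> : (b - a) * b = b ^+ 2 - D by rewrite Ha; field; lra.
  lra.
have Hn' : n = a * b * (b - a + 2 * c0) / 2.
  by rewrite Hab Hba Hk; field; lra.
have He' : e = (xx + a * b) / 2 by rewrite Hab HDe; field.
move: Hmu; rewrite HDe => Hmu.
have [He1 He2] := @core R a b c0 xx e gamma n mu a0 b0 Heg (etrans Hab HDe) Hn' n0 Hmu Hc2.
pose hv : 'cV[R]_2 := \col_(i < 2) h i.
have hvE : forall i, hv i 0 = h i by move=> i; rewrite mxE.
pose v1 := v + b *: hv.
pose v2 := v - a *: hv.
have v1E : forall i, v1 i 0 = v i 0 + b * h i by move=> i; rewrite !mxE.
have v2E : forall i, v2 i 0 = v i 0 - a * h i by move=> i; rewrite !mxE.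
pose e1 := (xx + 2 * b * c0 + b ^+ 2) / 2.
pose e2 := (xx - 2 * a * c0 + a ^+ 2) / 2.
have Hv1 : v1 0 0 ^+ 2 + v1 1 0 ^+ 2 = 2 * e1.
  rewrite !v1E /e1; transitivity (xx + 2 * b * c0 + b ^+ 2 * (h 0 ^+ 2 + h 1 ^+ 2)).
    by rewrite Hxx Hc0; ring.
  by rewrite Hh1; field.
have Hv2 : v2 0 0 ^+ 2 + v2 1 0 ^+ 2 = 2 * e2.
  rewrite !v2E /e2; transitivity (xx - 2 * a * c0 + a ^+ 2 * (h 0 ^+ 2 + h 1 ^+ 2)).
    by rewrite Hxx Hc0; ring.
  by rewrite Hh1; field.
right.
exists (mkZ v1 ((e1 + p) *: v1) (tens v1 v1 - e1 *: 1%:M) e1).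
exists (mkZ v2 ((e2 + p) *: v2) (tens v2 v2 - e2 *: 1%:M) e2).
exists (a / (a + b)).
split.
- exact: KgI.
- exact: KgI.
- apply/andP; split; first by rewrite divr_ge0 //; lra.
  by rewrite ler_pdivrMr; lra.
- pose xi : 'cV[R]_2 := \col_(i < 2) (if i == 0 then - h 1 else h 0).
  have xi0 : xi 0 0 = - h 1 by rewrite mxE.
  have xi1 : xi 1 0 = h 0 by rewrite mxE.
  split.
  + split => /=.
    * apply/matrixP => i j; rewrite !mxE !big_ord1 !mxE [j == i]eq_sym; ring.
    * rewrite trE !mxE !big_ord1 !mxE /=.
      rewrite !expr2 in Hv1 Hv2; rewrite -!v1E -!v2E; lra.
  + move=> /= [H _].
    have H0 := congr1 (fun w : 'cV[R]_2 => w 0 0) H.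
    have H1 := congr1 (fun w : 'cV[R]_2 => w 1 0) H.
    move: H0 H1; rewrite /= !mxE => H0 H1.
    have F0 : (a + b) * h 0 = 0 by rewrite -H0; ring.
    have F1 : (a + b) * h 1 = 0 by rewrite -H1; ring.
    have E0 : h 0 = 0.
      by move/eqP: F0; rewrite mulf_eq0 => /orP [/eqP|/eqP] //; lra.
    have E1 : h 1 = 0.
      by move/eqP: F1; rewrite mulf_eq0 => /orP [/eqP|/eqP] //; lra.
    by move: Hh1; rewrite E0 E1 expr0n /=; lra.
  + exists xi, (- (v 0 0 * xi 0 0 + v 1 0 * xi 1 0)).
    split; [left|split; [|split]].
    * move=> H; have := congr1 (fun w : 'cV[R]_2 => w 0 0) H.
      have := congr1 (fun w : 'cV[R]_2 => w 1 0) H.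
      rewrite /= xi0 xi1 !mxE => E0 E1.
      by move: Hh1; rewrite E0 -[h 1]opprK E1 oppr0 expr0n /=; lra.
    * apply: cVP => i; rewrite /= [LHS]mxE mulE xi0 xi1 !mxE !big_ord1 !mxE; ring.

    * rewrite dotE xi0 xi1 /= !mxE; ring.
    * rewrite dotE xi0 xi1 /= !mxE; ring.
- have ab0 : a + b != 0 by apply/lt0r_neq0; lra.
  rewrite /zcomb /=; congr mkZ.
  + apply: cVP => i; rewrite !mxE; field; exact: ab0.
  + apply: cVP => i; rewrite !mxE Hm Hn' He' /e1 /e2; field; exact: ab0.
  + apply/matrixP => i j; rewrite Hs !mxE !big_ord1 !mxE -Hab He' /e1 /e2.
    field; exact: ab0.
  + rewrite He' /e1 /e2; field; exact: ab0.
Qed.
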